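(* Let $p\geq 1$, $\vec n\in\mathbb N_0^p$, $N\in\mathbb N_0$ with $|\vec n|\le N$, and let $\alpha_1,\dots,\alpha_p,\beta,x\in\mathbb R$ be such that all Pochhammer symbols appearing in denominators below are nonzero. Then $$\sum_{l_1=0}^{n_1}\cdots\sum_{l_p=0}^{n_p}\frac{(-N)_{l_1+\cdots+l_p}(x)_{l_1+\cdots+l_p}}{(x+\beta+2)_{l_1+\cdots+l_p}}C^{l_1,\dots,l_p}_{\vec n}=\frac{(\beta+2)_{|\vec n|-1}(-N)_{|\vec n|}}{(x+\beta+2)_{|\vec n|}\prod_{q=1}^p(\alpha_q+\beta+|\vec n|+1)_{n_q}}\Big((x+\beta+|\vec n|+1)\prod_{q=1}^p(\alpha_q-x+1)_{n_q}-x\prod_{q=1}^p(\alpha_q-x)_{n_q}\Big).$$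
   Context: $(a)_m=a(a+1)\cdots(a+m-1)$, $(a)_0=1$, and for $m\ge1$, $(a)_{m-1}$ is as usual; $|\vec n|=n_1+\cdots+n_p$. The coefficients are $$C^{l_1,\dots,l_p}_{\vec n}=\frac{(-N)_{|\vec n|}}{(-N)_{l_1+\cdots+l_p}}\prod_{i=1}^p\frac{(\alpha_i+1)_{n_i}}{(\alpha_i+\beta+|\vec n|+1)_{n_i}}\frac{(-n_i)_{l_i}}{l_i!}\frac{(\alpha_i+\beta+\sum_{k=1}^i n_k+1)_{\sum_{j=i}^p l_j}}{(\alpha_i+1)_{\sum_{j=i}^p l_j}}\prod_{i=1}^{p-1}\frac{(\alpha_i+n_i+1)_{\sum_{j=i+1}^p l_j}}{(\alpha_i+\beta+\sum_{k=1}^i n_k+1)_{\sum_{j=i+1}^p l_j}}.$$ *)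

(* Defs.v *)
From HB Require Import structures.
From mathcomp Require Import all_boot all_order all_algebra.
Set Implicit Arguments. Unset Strict Implicit. Unset Printing Implicit Defensive.
Import Order.TTheory GRing.Theory Num.Theory.
Local Open Scope ring_scope.

Definition poch {R : pzRingType} (a : R) (m : nat) : R :=
  \prod_(i < m) (a + i%:R).

(* (a)_{m-1} with the standard convention (a)_{-1} = 1/(a-1) when m = 0. *)
Definition poch_pred {R : fieldType} (a : R) (m : nat) : R :=
  if m is m'.+1 then poch a m' else (a - 1)^-1.

Definition tot {p : nat} (n : 'I_p -> nat) : nat := (\sum_(i < p) n i)%N.

Definition sum_ge {p : nat} (l : 'I_p -> nat) (i : 'I_p) : nat :=
  (\sum_(j < p | (i <= j)%N) l j)%N.
Definition sum_gt {p : nat} (l : 'I_p -> nat) (i : 'I_p) : nat :=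
  (\sum_(j < p | (i < j)%N) l j)%N.
Definition sum_le {p : nat} (n : 'I_p -> nat) (i : 'I_p) : nat :=
  (\sum_(k < p | (k <= i)%N) n k)%N.

(* The coefficient C^{l_1,...,l_p}_{n} of the paper (indices i = 1..p are
   the ordinals 0..p-1; the product over i = 1..p-1 is over i with i+1 < p). *)
Definition Ccoef {R : fieldType} (p N : nat) (alpha : 'I_p -> R) (beta : R)
    (n l : 'I_p -> nat) : R :=
  poch (- (N%:R)) (tot n) / poch (- (N%:R)) (tot l)
  * (\prod_(i < p)
       (poch (alpha i + 1) (n i) / poch (alpha i + beta + (tot n)%:R + 1) (n i)
        * (poch (- ((n i)%:R)) (l i) / ((l i)`!)%:R)
        * (poch (alpha i + beta + (sum_le n i)%:R + 1) (sum_ge l i)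
           / poch (alpha i + 1) (sum_ge l i))))
  * (\prod_(i < p | (i.+1 < p)%N)
       (poch (alpha i + (n i)%:R + 1) (sum_gt l i)
        / poch (alpha i + beta + (sum_le n i)%:R + 1) (sum_gt l i))).

(* Main.v *)
Require Import Defs.
From HB Require Import structures.
From mathcomp Require Import all_boot all_order all_algebra.
From mathcomp Require Import ring lra.
From Stdlib Require Import FunctionalExtensionality.
Import Order.TTheory GRing.Theory Num.Theory.
Local Open Scope ring_scope.
Section P.
Variable R : realFieldType.
Implicit Types a b c d : R.

Lemma poch0 a : poch a 0 = 1.
Proof. by rewrite /poch big_ord0. Qed.

Lemma pochSr a n : poch a n.+1 = poch a n * (a + n%:R).
Proof. by rewrite /poch big_ord_recr. Qed.

Lemma pochSl a n : poch a n.+1 = a * poch (a + 1) n.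
Proof.
rewrite /poch big_ord_recl /= addr0; congr (_ * _).
apply: eq_bigr => i _; rewrite /bump /= add1n -addn1 natrD; ring.
Qed.

Lemma poch_add a m k : poch a (m + k) = poch a m * poch (a + m%:R) k.
Proof.
rewrite /poch big_split_ord /=; congr (_ * _).
apply: eq_bigr => i _ /=; rewrite natrD; ring.
Qed.

Lemma poch_negnat (n l : nat) :
  poch (- (n%:R : R)) l / (l`!)%:R = (-1) ^+ l * ('C(n, l))%:R.
Proof.
elim: l => [|l IH]; first by rewrite poch0 bin0 fact0 expr0 !mulr1n mul1r invr1 mulr1.
rewrite pochSr factS natrM invfM.
have -> : poch (- (n%:R : R)) l * (- n%:R + l%:R) * ((l.+1)%:R^-1 * (l`!)%:R^-1)
   = (poch (- (n%:R : R)) l / (l`!)%:R) * ((- n%:R + l%:R) / (l.+1)%:R) by ring.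
rewrite IH.
have hl : (1 + l%:R : R) != 0 by rewrite addrC -mulrSr pnatr_eq0.
have e := congr1 (fun k => k%:R : R) (mul_bin_left n l); rewrite /= !natrM in e.
case: (leqP l n) => hln.
  rewrite natrB // in e.
  have -> : ('C(n, l.+1))%:R = (n%:R - l%:R) * ('C(n, l))%:R / (l.+1)%:R :> R.
    by rewrite -e; field; exact: hl.
  rewrite exprS; field; exact: hl.
by rewrite (bin_small hln) (bin_small (leqW hln)) !mulr0 mul0r.
Qed.

Definition Tsum n a b c d :=
  \sum_(l < n.+1) (-1)^+l * ('C(n,l))%:R * (poch a l * poch b l / (poch c l * poch d l)).

Lemma G1 n (g : nat -> R) :
  \sum_(l < n.+2) (-1)^+l * ('C(n.+1,l))%:R * g l =
  \sum_(l < n.+1) (-1)^+l * ('C(n,l))%:R * g l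
  - \sum_(l < n.+1) (-1)^+l * ('C(n,l))%:R * g l.+1.
Proof.
rewrite big_ord_recl [in X in _ = X - _]big_ord_recl /=.
rewrite (eq_bigr (fun i : 'I_n.+1 => - ((-1)^+i * ('C(n,i.+1))%:R * g i.+1)
                   - (-1)^+i * ('C(n,i))%:R * g i.+1)); last first.
  by move=> i _; rewrite /bump /= add1n binS natrD exprS; ring.
rewrite big_split /= sumrN big_ord_recr /= (bin_small (ltnSn n)) mulr0n mulr0 mul0r addr0.
rewrite (eq_bigr (fun i : 'I_n => -((-1)^+i * ('C(n,i.+1))%:R * g i.+1))
   (_ : forall i : 'I_n, true -> (-1) ^+ bump 0 i * 'C(n, bump 0 i)%:R * g (bump 0 i) = _)); last first.
  by move=> i _; rewrite /bump /= add1n exprS; ring.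
rewrite !sumrN !bin0; ring.
Qed.

Lemma G2 n (h : nat -> R) :
  \sum_(l < n.+2) (-1)^+l * ('C(n.+1,l))%:R * (l%:R * h l.-1) =
  - ((n.+1)%:R * \sum_(l < n.+1) (-1)^+l * ('C(n,l))%:R * h l).
Proof.
rewrite big_ord_recl /= mulr0n mul0r mulr0 add0r mulr_sumr -sumrN.
apply: eq_bigr => i _; rewrite /bump /= add1n.
have e := congr1 (fun k => k%:R : R) (mul_bin_diag n.+1 i); rewrite /= !natrM in e.
rewrite exprS.
have -> : (-1) * (-1) ^+ i * 'C(n.+1, i.+1)%:R * (i.+1%:R * h i)
   = - ((-1) ^+ i * (i.+1%:R * 'C(n.+1, i.+1)%:R) * h i) by ring.
by rewrite -e; ring.
Qed.

Lemma TA n a b c d : Tsum n.+1 a b c d =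
  Tsum n a b c d - a * b / (c * d) * Tsum n (a+1) (b+1) (c+1) (d+1).
Proof.
rewrite /Tsum (G1 n (fun l => poch a l * poch b l / (poch c l * poch d l))); congr (_ - _); rewrite mulr_sumr; apply: eq_bigr => l _.
by rewrite !pochSl !invfM; ring.
Qed.

Lemma TB n a b c d : Tsum n.+1 a b c d =
  Tsum n.+1 (a-1) b c d - (n.+1)%:R * b / (c * d) * Tsum n a (b+1) (c+1) (d+1).
Proof.
pose h k := poch a k * poch b k.+1 / (poch c k.+1 * poch d k.+1).
have E : forall l : 'I_n.+2, true ->
  (-1)^+l * ('C(n.+1,l))%:R * (poch a l * poch b l / (poch c l * poch d l)) =
  (-1)^+l * ('C(n.+1,l))%:R * (poch (a-1) l * poch b l / (poch c l * poch d l))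
  + (-1)^+l * ('C(n.+1,l))%:R * ((l : nat)%:R * h (l : nat).-1).
  move=> [[|k] hk] _ /=; first by rewrite !poch0 mulr0n !mul0r mulr0 addr0.
  rewrite /h pochSr [poch (a-1) _]pochSl subrK; ring.
rewrite /Tsum (eq_bigr _ E) big_split /= G2.
rewrite /h mulr_sumr; congr (_ + _); congr (- _); rewrite mulr_sumr.
apply: eq_bigr => l _; rewrite !pochSl !invfM; ring.
Qed.

Lemma poch_neq0S a n : poch a n.+1 != 0 ->
  [/\ a != 0, poch (a+1) n != 0, poch a n != 0 & a + n%:R != 0].
Proof.
move=> h; have h1 := h; rewrite pochSl mulf_eq0 negb_or in h1.
rewrite pochSr mulf_eq0 negb_or in h.
by case/andP: h1 => -> ->; case/andP: h => -> ->.
Qed.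

Lemma saal n : forall a b c d, c + d = a + b - n%:R + 1 ->
  poch c n != 0 -> poch d n != 0 ->
  Tsum n a b c d = (-1)^+n * poch (c-a) n * poch (c-b) n / (poch c n * poch d n).
Proof.
elim: n => [|n IH] a b c d hcd hc hd.
  by rewrite /Tsum big_ord1 !poch0 expr0 bin0 !(mul1r, mulr1).
case/poch_neq0S: hc => c0 c1 cn cn'.
case/poch_neq0S: hd => d0 d1 dn dn'.
rewrite TB TA subrK.
rewrite IH; last 3 first.
- by rewrite hcd -natr1; ring.
- exact: cn.
- exact: dn.
rewrite IH; last 3 first.
- by transitivity (c + d + 2); [ring | rewrite hcd -natr1; ring].
- exact: c1.
- exact: d1.
have Pc : poch (c+1) n = poch c n * (c + n%:R) / c.
  by apply: (mulfI c0); rewrite -pochSl pochSr mulrCA mulfV // mulr1.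
have Pd : poch (d+1) n = poch d n * (d + n%:R) / d.
  by apply: (mulfI d0); rewrite -pochSl pochSr mulrCA mulfV // mulr1.
rewrite Pc Pd.
have -> : c - (a - 1) = c - a + 1 by ring.
have -> : c + 1 - a = c - a + 1 by ring.
have -> : c + 1 - (b + 1) = c - b by ring.
rewrite [poch (c - a) n.+1]pochSl [poch (c - b) n.+1]pochSr [poch c n.+1]pochSr [poch d n.+1]pochSr exprS.
have hd' : d = a + b - n%:R - c.
  by rewrite -[d](addKr c) hcd -natr1; ring.
move: cn dn cn' dn' d0; rewrite hd' => cn dn cn' dn' d0.
field.
by rewrite cn dn cn' dn' c0 d0.
Qed.

Lemma poch_rev (z : R) n : poch (- z - n%:R + 1) n = (-1)^+n * poch z n.
Proof.
elim: n z => [|n IH] z; first by rewrite !poch0 expr0 mulr1.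
rewrite pochSl pochSr exprS.
have -> : - z - n.+1%:R + 1 + 1 = - z - n%:R + 1 by rewrite -natr1; ring.
rewrite IH -natr1; ring.
Qed.

Lemma neg1_sq n : (-1 : R) ^+ n * (-1) ^+ n = 1.
Proof. by rewrite -exprMn mulrNN mulr1 expr1n. Qed.

Lemma poch_addC (z : R) m k : poch z (m + k) = poch z k * poch (z + k%:R) m.
Proof. by rewrite addnC poch_add. Qed.

Lemma poch_split_neq0 (z : R) m k : poch z (m + k) != 0 ->
  poch z m != 0 /\ poch (z + m%:R) k != 0.
Proof. by rewrite poch_add mulf_eq0 negb_or => /andP[]. Qed.

Definition k0 (n : nat) (al be : R) (s a : nat) :=
  poch (- (n%:R)) a / (a`!)%:R * poch (al + be + n%:R + 1 + s%:R) a
  * (poch (al + 1) (n + s) / poch (al + 1) (a + s)).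

Lemma I0 (x be al : R) (n s : nat) :
  poch (al+1) (s+n) != 0 -> poch (x+be+1) (s+n) != 0 ->
  \sum_(a < n.+1) (poch x (a+s) / poch (x+be+1) (a+s)) * k0 n al be s a
  = poch (al - x + 1) n * poch (be+1) n / poch (x+be+1) n
    * (poch x s / poch (x+(be+n%:R)+1) s).
Proof.
move=> hA hY.
have [As Cn] := poch_split_neq0 _ _ _ hA.
have [Ys Dn] := poch_split_neq0 _ _ _ hY.
have hY' := hY; rewrite addnC in hY'.
have [Yn Zs] := poch_split_neq0 _ _ _ hY'.
have EZ : x + be + 1 + n%:R = x + (be + n%:R) + 1 by ring.
rewrite EZ in Zs.
transitivity (poch x s * (poch (al+1) s * poch (al+1+s%:R) n)
               / (poch (x+be+1) s * poch (al+1) s)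
  * Tsum n (x + s%:R) (al + be + n%:R + 1 + s%:R) (al+1+s%:R) (x+be+1+s%:R)).
  rewrite /Tsum mulr_sumr; apply: eq_bigr => a _.
  rewrite /k0 !poch_addC poch_negnat !invfM; ring.
rewrite saal; last 3 first.
- ring.
- exact: Cn.
- exact: Dn.
have -> : al + 1 + s%:R - (x + s%:R) = al - x + 1 by ring.
have -> : al + 1 + s%:R - (al + be + n%:R + 1 + s%:R) = - (be + 1) - n%:R + 1 by ring.
rewrite poch_rev.
have ED : poch (x + be + 1 + s%:R) n = poch (x+be+1) n * poch (x + (be + n%:R) + 1) s / poch (x+be+1) s.
  apply: (mulfI Ys); rewrite -poch_add -EZ -poch_addC mulrCA mulfV // mulr1.
  by rewrite addnC.
rewrite ED.
have -> : (-1) ^+ n * poch (al - x + 1) n * ((-1) ^+ n * poch (be + 1) n)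
   = poch (al - x + 1) n * poch (be + 1) n.
  by rewrite mulrACA neg1_sq mul1r.
field.
by rewrite Zs Yn Cn As Ys.
Qed.

Lemma I1 (x be al : R) (m s : nat) :
  poch (al+1) (s+m.+1) != 0 -> poch (x+be+2) (s+m.+1) != 0 ->
  \sum_(a < m.+2) (poch x (a+s) / poch (x+be+2) (a+s)) * k0 m.+1 al be s a
  = poch (be+2) m * poch (al - x + 1) m / poch (x+be+2) m.+1
    * ((al - x) * (be + m.+1%:R + 1) * (poch x s / poch (x+(be+m.+1%:R)+2) s)
       + m.+1%:R * (x + (be + m.+1%:R) + 1) * (poch x s / poch (x+(be+m.+1%:R)+1) s)).
Proof.
move=> hA hY.
have [As Cn] := poch_split_neq0 _ _ _ hA.
have [Ys Dn] := poch_split_neq0 _ _ _ hY.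
have hY' := hY; rewrite addnC in hY'.
have [Yn Z2s] := poch_split_neq0 _ _ _ hY'.
have EZ : x + be + 2 + m.+1%:R = x + (be + m.+1%:R) + 2 by ring.
rewrite EZ in Z2s.
case/poch_neq0S: Cn => c0 c1 cm cm'.
case/poch_neq0S: Dn => d0 d1 dm dm'.
case/poch_neq0S: (Yn) => _ _ Ym ym.
have y0 : x + (be + m.+1%:R) + 1 != 0.
  have -> : x + (be + m.+1%:R) + 1 = x + be + 2 + m%:R by rewrite -natr1; ring.
  exact: ym.
have ys0 : x + (be + m.+1%:R) + 1 + s%:R != 0.
  have -> : x + (be + m.+1%:R) + 1 + s%:R = x + be + 2 + s%:R + m%:R by rewrite -natr1; ring.
  exact: dm'.
transitivity (poch x s * (poch (al+1) s * poch (al+1+s%:R) m.+1)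
               / (poch (x+be+2) s * poch (al+1) s)
  * Tsum m.+1 (x + s%:R) (al + be + m.+1%:R + 1 + s%:R) (al+1+s%:R) (x+be+2+s%:R)).
  rewrite /Tsum mulr_sumr; apply: eq_bigr => a _.
  rewrite /k0 !poch_addC poch_negnat !invfM; ring.
rewrite TA saal; last 3 first.
- rewrite -natr1; ring.
- exact: cm.
- exact: dm.
rewrite saal; last 3 first.
- rewrite -natr1; ring.
- exact: c1.
- exact: d1.
have -> : al + 1 + s%:R - (x + s%:R) = al - x + 1 by ring.
have -> : al + 1 + s%:R + 1 - (x + s%:R + 1) = al - x + 1 by ring.
have -> : al + 1 + s%:R - (al + be + m.+1%:R + 1 + s%:R) = - (be + 2) - m%:R + 1.
  by rewrite -natr1; ring.
have -> : al + 1 + s%:R + 1 - (al + be + m.+1%:R + 1 + s%:R + 1) = - (be + 2) - m%:R + 1.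
  by rewrite -natr1; ring.
rewrite poch_rev.
have -> : forall u v : R, (-1) ^+ m * u * ((-1) ^+ m * v) = u * v.
  by move=> u v; rewrite mulrACA neg1_sq mul1r.
have Pc : poch (al+1+s%:R+1) m = poch (al+1+s%:R) m * (al+1+s%:R + m%:R) / (al+1+s%:R).
  by apply: (mulfI c0); rewrite -pochSl pochSr mulrCA mulfV // mulr1.
have Pd : poch (x+be+2+s%:R+1) m = poch (x+be+2+s%:R) m * (x+be+2+s%:R + m%:R) / (x+be+2+s%:R).
  by apply: (mulfI d0); rewrite -pochSl pochSr mulrCA mulfV // mulr1.
rewrite Pc Pd pochSr.
have ED : poch (x + be + 2 + s%:R) m = poch (x+be+2) m.+1 * poch (x + (be + m.+1%:R) + 2) s
          / (poch (x+be+2) s * (x + be + 2 + s%:R + m%:R)).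
  have ED0 : poch (x+be+2) s * (poch (x+be+2+s%:R) m * (x+be+2+s%:R+m%:R))
      = poch (x+be+2) m.+1 * poch (x+(be+m.+1%:R)+2) s.
    by rewrite -pochSr -poch_add -EZ -poch_addC addnC.
  apply: (mulfI (mulf_neq0 Ys dm')).
  by rewrite mulrCA mulfV ?mulf_neq0 // mulr1 -ED0; ring.
have EZ1 : poch (x + (be + m.+1%:R) + 1) s = (x + (be + m.+1%:R) + 1) * poch (x + (be + m.+1%:R) + 2) s
           / (x + (be + m.+1%:R) + 1 + s%:R).
  apply: (mulfI ys0); rewrite mulrCA mulfV // mulr1 mulrC -pochSr pochSl.
  by congr (_ * poch _ _); ring.
rewrite ED EZ1.
have e1 : x + be + 2 + s%:R + m%:R = x + (be + m.+1%:R) + 1 + s%:R by rewrite -natr1; ring.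
rewrite e1.
move: d0 dm'; rewrite e1 => d0 dm'.
field.
by rewrite nat1r ys0 Z2s y0 Yn d0 Ys c0 cm' cm As.
Qed.

Definition fcons M p (a : 'I_M) (l : {ffun 'I_p -> 'I_M}) : {ffun 'I_p.+1 -> 'I_M} :=
  [ffun i => if unlift ord0 i is Some j then l j else a].
Definition ftail M p (l : {ffun 'I_p.+1 -> 'I_M}) : {ffun 'I_p -> 'I_M} :=
  [ffun j => l (lift ord0 j)].
Arguments fcons {M p}.
Arguments ftail {M p}.

Lemma sum_ffunS M p (F : {ffun 'I_p.+1 -> 'I_M} -> R) :
  \sum_(l : {ffun 'I_p.+1 -> 'I_M}) F l =
  \sum_(a : 'I_M) \sum_(l' : {ffun 'I_p -> 'I_M}) F (fcons a l').
Proof.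
rewrite pair_big /=.
rewrite (reindex (fun q : 'I_M * {ffun 'I_p -> 'I_M} => fcons q.1 q.2)) //=.
exists (fun l : {ffun 'I_p.+1 -> 'I_M} => (l ord0, ftail l)) => [q _|l _].
  case: q => a l'; congr (_, _); first by rewrite ffunE unlift_none.
  by apply/ffunP => j; rewrite !ffunE liftK.
apply/ffunP => i; rewrite ffunE; case: unliftP => [j ->|->] /=.
  by rewrite ffunE.
by [].
Qed.

Lemma tot_S p (f : 'I_p.+1 -> nat) : tot f = (f ord0 + tot (fun j => f (lift ord0 j)))%N.
Proof. by rewrite /tot big_ord_recl. Qed.

Lemma sum_le_0 p (f : 'I_p.+1 -> nat) : sum_le f ord0 = f ord0.
Proof.
by rewrite /sum_le big_mkcond big_ord_recl /= big1 ?addn0.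
Qed.

Lemma sum_le_S p (f : 'I_p.+1 -> nat) j :
  sum_le f (lift ord0 j) = (f ord0 + sum_le (fun k => f (lift ord0 k)) j)%N.
Proof.
rewrite /sum_le big_mkcond big_ord_recl /= [in RHS]big_mkcond; congr (_ + _)%N.
Qed.

Lemma sum_ge_0 p (f : 'I_p.+1 -> nat) : sum_ge f ord0 = (f ord0 + tot (fun j => f (lift ord0 j)))%N.
Proof. by rewrite /sum_ge /tot big_ord_recl. Qed.

Lemma sum_ge_S p (f : 'I_p.+1 -> nat) j :
  sum_ge f (lift ord0 j) = sum_ge (fun k => f (lift ord0 k)) j.
Proof.
rewrite /sum_ge big_mkcond big_ord_recl /= [in RHS]big_mkcond /bump /=.
by rewrite add0n.
Qed.

Lemma sum_gt_0 p (f : 'I_p.+1 -> nat) : sum_gt f ord0 = tot (fun j => f (lift ord0 j)).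
Proof. by rewrite /sum_gt /tot big_mkcond big_ord_recl /= add0n. Qed.

Lemma sum_gt_S p (f : 'I_p.+1 -> nat) j :
  sum_gt f (lift ord0 j) = sum_gt (fun k => f (lift ord0 k)) j.
Proof.
rewrite /sum_gt big_mkcond big_ord_recl /= [in RHS]big_mkcond /bump /=.
by rewrite add0n.
Qed.

Definition Kf p (be : R) (n : 'I_p -> nat) (al : 'I_p -> R) (l : 'I_p -> nat) : R :=
  \prod_(i < p) (poch (- ((n i)%:R)) (l i) / ((l i)`!)%:R
     * poch (al i + be + (sum_le n i)%:R + 1 + (sum_gt l i)%:R) (l i)
     * (poch (al i + 1) (n i + sum_gt l i) / poch (al i + 1) (sum_ge l i))).
Arguments Kf {p}.

Definition Phi M p (w : nat -> R) (be : R) (n : 'I_p -> nat) (al : 'I_p -> R) : R :=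
  \sum_(l : {ffun 'I_p -> 'I_M} | [forall i, (l i <= n i)%N])
     w (tot (fun i => nat_of_ord (l i))) * Kf be n al (fun i => nat_of_ord (l i)).
Arguments Phi M {p}.

Lemma Kf_S p be (n : 'I_p.+1 -> nat) al l :
  Kf be n al l = k0 (n ord0) (al ord0) be (tot (fun j => l (lift ord0 j))) (l ord0)
   * Kf (be + (n ord0)%:R) (fun j => n (lift ord0 j)) (fun j => al (lift ord0 j))
        (fun j => l (lift ord0 j)).
Proof.
rewrite /Kf big_ord_recl sum_le_0 sum_gt_0 sum_ge_0 /k0; congr (_ * _).
apply: eq_bigr => j _; rewrite sum_le_S sum_gt_S sum_ge_S natrD.
by congr (_ * poch _ _ * _); ring.
Qed.

Lemma Phi_S M p w be (n : 'I_p.+1 -> nat) al : (n ord0 < M)%N ->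
  Phi M w be n al =
  \sum_(l' : {ffun 'I_p -> 'I_M} | [forall i, (l' i <= n (lift ord0 i))%N])
   (\sum_(a < (n ord0).+1) w (a + tot (fun i => nat_of_ord (l' i)))%N
        * k0 (n ord0) (al ord0) be (tot (fun i => nat_of_ord (l' i))) a)
   * Kf (be + (n ord0)%:R) (fun j => n (lift ord0 j)) (fun j => al (lift ord0 j))
        (fun i => nat_of_ord (l' i)).
Proof.
move=> hM.
rewrite /Phi big_mkcond sum_ffunS exchange_big /= [RHS]big_mkcond.
apply: eq_bigr => l' _.
have Hc : forall a : 'I_M, [forall i, (fcons a l' i <= n i)%N]
          = (a <= n ord0)%N && [forall j, (l' j <= n (lift ord0 j))%N].
  move=> a; apply/forallP/andP => [H|[H1 /forallP H2] i].
    split; first by have := H ord0; rewrite ffunE unlift_none.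
    by apply/forallP => j; have := H (lift ord0 j); rewrite ffunE liftK.
  by rewrite ffunE; case: unliftP => [j ->|->]; [exact: H2|exact: H1].
have Ht : forall a : 'I_M, (fun j => nat_of_ord (fcons a l' (lift ord0 j)))
          = (fun j => nat_of_ord (l' j)).
  by move=> a; apply: functional_extensionality => j; rewrite ffunE liftK.
case E: [forall j, (l' j <= n (lift ord0 j))%N].
  pose F := fun a : nat => w ((a + tot (fun i => nat_of_ord (l' i)))%N)
      * k0 (n ord0) (al ord0) be (tot (fun i => nat_of_ord (l' i))) a.
  rewrite /= (big_ord_widen M F hM) /F.
  rewrite big_distrl /= [RHS]big_mkcond /=.
  apply: eq_bigr => a _; rewrite Hc E andbT ltnS.
  case: ifP => // _.
  rewrite tot_S Kf_S Ht /= ffunE unlift_none; ring.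
by rewrite big1 // => a _; rewrite Hc E andbF.
Qed.

Definition ncons p (a : nat) (f : 'I_p -> nat) : 'I_p.+1 -> nat :=
  fun i => if unlift ord0 i is Some j then f j else a.
Arguments ncons {p}.

Lemma ncons0 p (a : nat) (f : 'I_p -> nat) : ncons a f ord0 = a.
Proof. by rewrite /ncons unlift_none. Qed.

Lemma nconsS p (a : nat) (f : 'I_p -> nat) : (fun j => ncons a f (lift ord0 j)) = f.
Proof. by apply: functional_extensionality => j; rewrite /ncons liftK. Qed.

Lemma ncons_le p (a : nat) (f : 'I_p -> nat) (n : 'I_p.+1 -> nat) :
  (a <= n ord0)%N -> (forall j, f j <= n (lift ord0 j))%N -> forall i, (ncons a f i <= n i)%N.
Proof. by move=> h0 h i; rewrite /ncons; case: unliftP => [j ->|->]. Qed.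

Lemma le_tot p (n : 'I_p -> nat) i : (n i <= tot n)%N.
Proof. by rewrite /tot (bigD1 i) //= leq_addr. Qed.

Lemma tot_le p (f g : 'I_p -> nat) : (forall i, f i <= g i)%N -> (tot f <= tot g)%N.
Proof. by move=> h; apply: leq_sum => i _. Qed.

Lemma Kf_zero p be (n : 'I_p -> nat) al (l : 'I_p -> nat) :
  (forall i, n i = 0%N) -> (forall i, l i = 0%N) -> Kf be n al l = 1.
Proof.
move=> hn hl; apply: big1 => i _.
have g0 : sum_gt l i = 0%N by apply: big1 => j _; rewrite hl.
have g1 : sum_ge l i = 0%N by apply: big1 => j _; rewrite hl.
by rewrite g0 g1 hn hl !poch0 fact0 mulr1n invr1 !mulr1.
Qed.

Lemma Phi_tot0 M p w be (n : 'I_p -> nat) al :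
  (forall i, n i < M)%N -> tot n = 0%N -> Phi M w be n al = w 0%N.
Proof.
move=> hM h0.
have hn : forall i, n i = 0%N by move=> i; apply/eqP; rewrite -leqn0 -h0 le_tot.
pose l0 : {ffun 'I_p -> 'I_M} := [ffun i => Ordinal (hM i)].
rewrite /Phi (big_pred1 l0); last first.
  move=> l /=; apply/forallP/eqP => [H|->] => [|i].
    apply/ffunP => i; apply/val_inj; rewrite ffunE /= hn; apply/eqP.
    by rewrite -leqn0 -(hn i) H.
  by rewrite ffunE.
have -> : tot (fun i => nat_of_ord (l0 i)) = 0%N.
  by rewrite -h0; apply: eq_bigr => i _; rewrite ffunE.
rewrite Kf_zero ?mulr1 // => i; rewrite ffunE /= hn //.
Qed.

Lemma hA_tail p (n : 'I_p.+1 -> nat) (al : 'I_p.+1 -> R) :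
  (forall l : 'I_p.+1 -> nat, (forall i, l i <= n i)%N ->
     forall i, poch (al i + 1) (sum_ge l i) != 0) ->
  (forall l : 'I_p -> nat, (forall i, l i <= n (lift ord0 i))%N ->
     forall i, poch (al (lift ord0 i) + 1) (sum_ge l i) != 0).
Proof.
move=> hA l hl i.
have := hA (ncons 0%N l) (@ncons_le _ 0%N l n (leq0n _) hl) (lift ord0 i).
by rewrite sum_ge_S nconsS.
Qed.

Lemma hA_head p (n : 'I_p.+1 -> nat) (al : 'I_p.+1 -> R) (l : 'I_p -> nat) :
  (forall l : 'I_p.+1 -> nat, (forall i, l i <= n i)%N ->
     forall i, poch (al i + 1) (sum_ge l i) != 0) ->
  (forall i, l i <= n (lift ord0 i))%N ->
  poch (al ord0 + 1) (tot l + n ord0) != 0.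
Proof.
move=> hA hl.
have := hA (ncons (n ord0) l) (@ncons_le _ (n ord0) l n (leqnn _) hl) ord0.
by rewrite sum_ge_0 nconsS ncons0 addnC.
Qed.

Lemma Phi0 M (x : R) p : forall be (n : 'I_p -> nat) (al : 'I_p -> R),
  (forall i, n i < M)%N ->
  (forall l : 'I_p -> nat, (forall i, l i <= n i)%N ->
     forall i, poch (al i + 1) (sum_ge l i) != 0) ->
  (forall L, (L <= tot n)%N -> poch (x + be + 1) L != 0) ->
  Phi M (fun s => poch x s / poch (x + be + 1) s) be n al
   = poch (be + 1) (tot n) / poch (x + be + 1) (tot n)
     * \prod_(i < p) poch (al i - x + 1) (n i).
Proof.
elim: p => [|p IH] be n al hM hA hY.
  rewrite Phi_tot0 //; last by rewrite /tot big_ord0.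
  by rewrite /tot big_ord0 !poch0 big_ord0 divr1 mulr1.
rewrite Phi_S //.
set n' := fun j => n (lift ord0 j).
set al' := fun j => al (lift ord0 j).
have hY0 : forall L, (L <= tot n')%N -> poch (x + (be + (n ord0)%:R) + 1) L != 0.
  move=> L hL; have := hY (n ord0 + L)%N; rewrite tot_S leq_add2l => /(_ hL).
  by rewrite poch_add (_ : x + be + 1 + (n ord0)%:R = x + (be + (n ord0)%:R) + 1) ?mulf_eq0 ?negb_or => [/andP[]|]; last ring.
rewrite (eq_bigr (fun l' : {ffun 'I_p -> 'I_M} =>
   poch (al ord0 - x + 1) (n ord0) * poch (be+1) (n ord0) / poch (x+be+1) (n ord0)
   * ((poch x (tot (fun i => nat_of_ord (l' i))) / poch (x + (be + (n ord0)%:R) + 1) (tot (fun i => nat_of_ord (l' i))))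
      * Kf (be + (n ord0)%:R) n' al' (fun i => nat_of_ord (l' i))))); last first.
  move=> l' /forallP hl'.
  rewrite /= I0 ?mulrA //.
  - exact: (@hA_head _ n al _ hA hl').
  - apply: hY; rewrite tot_S addnC leq_add2l; exact: tot_le.
rewrite -mulr_sumr.
rewrite [X in _ * X = _](_ : _ = Phi M (fun s => poch x s / poch (x + (be + (n ord0)%:R) + 1) s) (be + (n ord0)%:R) n' al') //.
rewrite (IH (be + (n ord0)%:R) n' al' (fun i => hM _) (@hA_tail _ n al hA) hY0).
rewrite [tot n]tot_S big_ord_recl !poch_add -/n'.
have -> : be + 1 + (n ord0)%:R = be + (n ord0)%:R + 1 by ring.
have -> : x + be + 1 + (n ord0)%:R = x + (be + (n ord0)%:R) + 1 by ring.
rewrite !invfM; ring.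
Qed.

Lemma poch_pred0 (z : R) : poch_pred z 0 = (z - 1)^-1.
Proof. by []. Qed.
Lemma poch_predS (z : R) k : poch_pred z k.+1 = poch z k.
Proof. by []. Qed.

Lemma tot0_all p (n : 'I_p -> nat) : tot n = 0%N -> forall i, n i = 0%N.
Proof. by move=> h0 i; apply/eqP; rewrite -leqn0 -h0 le_tot. Qed.

Lemma Phi1 M (x : R) p : forall be (n : 'I_p -> nat) (al : 'I_p -> R),
  (forall i, n i < M)%N ->
  (forall l : 'I_p -> nat, (forall i, l i <= n i)%N ->
     forall i, poch (al i + 1) (sum_ge l i) != 0) ->
  (forall L, (L <= tot n)%N -> poch (x + be + 2) L != 0) ->
  (tot n = 0%N -> be + 1 != 0) ->
  Phi M (fun s => poch x s / poch (x + be + 2) s) be n al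
   = poch_pred (be + 2) (tot n) / poch (x + be + 2) (tot n)
     * ((x + be + (tot n)%:R + 1) * \prod_(i < p) poch (al i - x + 1) (n i)
        - x * \prod_(i < p) poch (al i - x) (n i)).
Proof.
elim: p => [|p IH] be n al hM hA hY hB.
  have t0 : tot n = 0%N by rewrite /tot big_ord0.
  rewrite Phi_tot0 // t0 !poch0 !big_ord0 poch_pred0.
  have := hB t0; move=> h; field.
  by rewrite (_ : be + 2 - 1 = be + 1) //; ring.
rewrite Phi_S //.
set n' := fun j => n (lift ord0 j).
set al' := fun j => al (lift ord0 j).
have totS : tot n = (n ord0 + tot n')%N by rewrite tot_S.
have hA' := @hA_tail _ n al hA.
case En0: (n ord0) totS => [|m] totS.
  rewrite (eq_bigr (fun l' : {ffun 'I_p -> 'I_M} =>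
     (poch x (tot (fun i => nat_of_ord (l' i))) / poch (x + be + 2) (tot (fun i => nat_of_ord (l' i))))
      * Kf be n' al' (fun i => nat_of_ord (l' i)))); last first.
    move=> l' /forallP hl'.
    have hh := @hA_head _ n al _ hA hl'; rewrite En0 addn0 in hh.
    rewrite big_ord1 /= /k0 add0n addr0 !poch0 fact0 mulr1n invr1 !mulr1.
    by rewrite mul1r mulfV // mulr1 addr0.
  rewrite [LHS](_ : _ = Phi M (fun s => poch x s / poch (x + be + 2) s) be n' al') //.
  rewrite IH //; last 3 first.
  - by move=> i; apply: hM.
  - by move=> L hL; apply: hY; rewrite totS.
  - by move=> h; apply: hB; rewrite totS.
  by rewrite totS big_ord_recl [X in _ = _ * (_ - _ * X)]big_ord_recl En0 !poch0 !mul1r.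
set be' := be + m.+1%:R.
set kap := poch (be+2) m * poch (al ord0 - x + 1) m / poch (x+be+2) m.+1.
rewrite (eq_bigr (fun l' : {ffun 'I_p -> 'I_M} =>
   kap * (al ord0 - x) * (be' + 1) *
     ((poch x (tot (fun i => nat_of_ord (l' i))) / poch (x + be' + 2) (tot (fun i => nat_of_ord (l' i))))
      * Kf be' n' al' (fun i => nat_of_ord (l' i)))
   + kap * m.+1%:R * (x + be' + 1) *
     ((poch x (tot (fun i => nat_of_ord (l' i))) / poch (x + be' + 1) (tot (fun i => nat_of_ord (l' i))))
      * Kf be' n' al' (fun i => nat_of_ord (l' i))))); last first.
  move=> l' /forallP hl'.
  have hh := @hA_head _ n al _ hA hl'; rewrite En0 in hh.
  rewrite /= I1 //; first by rewrite /kap /be'; ring.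
  by apply: hY; rewrite totS addnC leq_add2l; apply: tot_le.
rewrite big_split /= -!mulr_sumr.
rewrite [X in _ * X + _ = _](_ : _ = Phi M (fun s => poch x s / poch (x + be' + 2) s) be' n' al') //.
rewrite [X in _ + _ * X = _](_ : _ = Phi M (fun s => poch x s / poch (x + be' + 1) s) be' n' al') //.
have hY1 : forall L, (L <= tot n')%N -> poch (x + be' + 1) L != 0.
  move=> L hL; have := hY (m + L)%N; rewrite totS addSn ltnW ?ltnS ?leq_add2l // => /(_ isT).
  rewrite poch_add mulf_eq0 negb_or => /andP[_].
  by rewrite (_ : x + be + 2 + m%:R = x + be' + 1) // /be' -natr1; ring.
have hY2 : forall L, (L <= tot n')%N -> poch (x + be' + 2) L != 0.
  move=> L hL; have := hY (m.+1 + L)%N; rewrite totS leq_add2l => /(_ hL).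
  rewrite poch_add mulf_eq0 negb_or => /andP[_].
  by rewrite (_ : x + be + 2 + m.+1%:R = x + be' + 2) // /be'; ring.
rewrite Phi0 //; last by move=> i; apply: hM.
rewrite totS !big_ord_recl En0.
have eP2 : \prod_(i < p) poch (al (lift ord0 i) - x + 1) (n (lift ord0 i))
         = \prod_(i < p.+1.-1) poch (al' i - x + 1) (n' i) by [].
have eP3 : \prod_(i < p) poch (al (lift ord0 i) - x) (n (lift ord0 i))
         = \prod_(i < p.+1.-1) poch (al' i - x) (n' i) by [].
rewrite eP2 eP3.
rewrite [poch (al ord0 - x + 1) m.+1]pochSr [poch (al ord0 - x) m.+1]pochSl.
have hYm : poch (x + be + 2) m.+1 != 0 by apply: hY; rewrite totS leq_addr.
case Et: (tot n') hY1 hY2 => [|k] hY1 hY2.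
  have all0 := tot0_all _ _ Et.
  rewrite Phi_tot0 //; last by move=> i; apply: hM.
  rewrite !big1 => [|i _|i _]; last 2 first.
  - by rewrite all0 poch0.
  - by rewrite all0 poch0.
  rewrite !poch0 addn0 poch_predS /kap /be' !invr1 !mulr1 -natr1.
  ring.
rewrite IH; last 4 first.
- by move=> i; apply: hM.
- by move=> l hl i; apply: (hA' l hl).
- by move=> L hL; apply: hY2; rewrite -Et.
- by rewrite Et.
rewrite Et poch_predS.
have hZ2 : poch (x + be' + 2) k.+1 != 0 by apply: hY2.
have hZ1 : poch (x + be' + 1) k.+1 != 0 by apply: hY1.
have hz : x + be' + 1 + k.+1%:R != 0.
  have -> : x + be' + 1 + k.+1%:R = x + be' + 2 + k%:R by rewrite -natr1; ring.
  by case/poch_neq0S: (hZ2).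
have hy : x + be' + 1 != 0 by case/poch_neq0S: hZ1.
have E1 : poch_pred (be + 2) (m.+1 + k.+1) = poch (be+2) m * ((be'+1) * poch (be'+2) k).
  rewrite addSn poch_predS poch_add pochSl.
  have -> : be + 2 + m%:R = be' + 1 by rewrite /be' -natr1; ring.
  have -> : be' + 1 + 1 = be' + 2 by ring.
  by [].
have E2 : poch (x+be+2) (m.+1 + k.+1) = poch (x+be+2) m.+1 * poch (x+be'+2) k.+1.
  rewrite poch_add.
  have -> : x + be + 2 + m.+1%:R = x + be' + 2 by rewrite /be'; ring.
  by [].
have E3 : poch (be'+1) k.+1 = (be'+1) * poch (be'+2) k.
  rewrite pochSl.
  have -> : be' + 1 + 1 = be' + 2 by ring.
  by [].
have E4 : poch (x+be'+1) k.+1 = (x+be'+1) * poch (x+be'+2) k.+1 / (x+be'+1+k.+1%:R).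
  apply: (mulfI hz); rewrite mulrCA mulfV // mulr1 mulrC -pochSr pochSl.
  have -> : x + be' + 1 + 1 = x + be' + 2 by ring.
  by [].
rewrite E1 E2 E3 E4 natrD.
set P2 := \prod_(i < p.+1.-1) poch (al' i - x + 1) (n' i).
set P3 := \prod_(i < p.+1.-1) poch (al' i - x) (n' i).
rewrite /kap /be'.
rewrite /be' in hz hy hZ2.
field.
by rewrite !nat1r hZ2 hYm hz hy.
Qed.

Lemma sum_ge_split p (l : 'I_p -> nat) i : sum_ge l i = (l i + sum_gt l i)%N.
Proof.
rewrite /sum_ge (bigD1 i) //=; congr (_ + _)%N.
apply: eq_bigl => j; by rewrite /= ltn_neqAle eq_sym andbC.
Qed.

Lemma cancel_help (A u v : R) : A != 0 -> u = v * (A / A) -> u = v.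
Proof. by move=> hA ->; rewrite mulfV // mulr1. Qed.

Lemma sum_gt_last p (l : 'I_p -> nat) (i : 'I_p) : ~~ (i.+1 < p)%N -> sum_gt l i = 0%N.
Proof.
move=> hi; rewrite /sum_gt big1 // => j hj; exfalso; move: hi => /negP; apply.
exact: (leq_ltn_trans hj (ltn_ord j)).
Qed.

Lemma Ccoef_Kf p N (al : 'I_p -> R) be (n l : 'I_p -> nat) :
  (forall i : 'I_p, (i.+1 < p)%N -> poch (al i + be + (sum_le n i)%:R + 1) (sum_gt l i) != 0) ->
  Ccoef N al be n l = poch (-(N%:R)) (tot n) / poch (-(N%:R)) (tot l)
    * ((\prod_(i < p) (poch (al i + be + (tot n)%:R + 1) (n i))^-1) * Kf be n al l).
Proof.
move=> H.
rewrite /Ccoef /Kf -mulrA; congr (_ * _).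
rewrite (big_mkcond (fun i : 'I_p => (i.+1 < p)%N)) -!big_split /=.
apply: eq_bigr => i _.
have e1 : poch (al i + be + (sum_le n i)%:R + 1) (sum_ge l i)
   = poch (al i + be + (sum_le n i)%:R + 1) (sum_gt l i)
     * poch (al i + be + (sum_le n i)%:R + 1 + (sum_gt l i)%:R) (l i).
  by rewrite sum_ge_split poch_addC.
have e2 : poch (al i + 1) (n i + sum_gt l i)
   = poch (al i + 1) (n i) * poch (al i + (n i)%:R + 1) (sum_gt l i).
  rewrite poch_add.
  have -> : al i + 1 + (n i)%:R = al i + (n i)%:R + 1 by ring.
  by [].
rewrite e1 e2; case: ifP => hi.
  apply: (cancel_help _ _ _ (H i hi)); ring.
rewrite (sum_gt_last _ l _ (negbT hi)) !poch0 ?invr1 addr0; ring.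
Qed.
End P.
Arguments Kf {R p}. Arguments Phi {R} M {p}.

Theorem mainTheorem2 (R : realFieldType) (p : nat) (N : nat)
    (n : 'I_p -> nat) (alpha : 'I_p -> R) (beta x : R) :
  (0 < p)%N ->
  (tot n <= N)%N ->
  (* all Pochhammer symbols appearing in denominators are nonzero *)
  (forall l : {ffun 'I_p -> 'I_N.+1}, (forall i, (l i <= n i)%N) ->
     [/\ poch (x + beta + 2) (tot (fun i => nat_of_ord (l i))) != 0,
         poch (- (N%:R : R)) (tot (fun i => nat_of_ord (l i))) != 0,
         (forall i, poch (alpha i + 1) (sum_ge (fun j => nat_of_ord (l j)) i) != 0)
       & (forall i : 'I_p, (i.+1 < p)%N ->
            poch (alpha i + beta + (sum_le n i)%:R + 1)
                 (sum_gt (fun j => nat_of_ord (l j)) i) != 0)]) ->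
  (forall i, poch (alpha i + beta + (tot n)%:R + 1) (n i) != 0) ->
  poch (x + beta + 2) (tot n) != 0 ->
  (* (beta+2)_{|n|-1} = (beta+2)_{-1} = 1/(beta+1) when |n| = 0 *)
  (tot n = 0%N -> beta + 1 != 0) ->
  \sum_(l : {ffun 'I_p -> 'I_N.+1} | [forall i, (l i <= n i)%N])
     (poch (- (N%:R : R)) (tot (fun i => nat_of_ord (l i)))
      * poch x (tot (fun i => nat_of_ord (l i)))
      / poch (x + beta + 2) (tot (fun i => nat_of_ord (l i)))
      * Ccoef N alpha beta n (fun i => nat_of_ord (l i)))
  = poch_pred (beta + 2) (tot n) * poch (- (N%:R : R)) (tot n)
    / (poch (x + beta + 2) (tot n)
       * \prod_(q < p) poch (alpha q + beta + (tot n)%:R + 1) (n q))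
    * ((x + beta + (tot n)%:R + 1) * \prod_(q < p) poch (alpha q - x + 1) (n q)
       - x * \prod_(q < p) poch (alpha q - x) (n q)).
Proof.
move=> hp hN hl hD hY0 hB.
have hnT : forall i, (n i <= N)%N := fun i => leq_trans (le_tot _ n i) hN.
rewrite (eq_bigr (fun l : {ffun 'I_p -> 'I_N.+1} =>
   poch (- (N%:R : R)) (tot n) * (\prod_(i < p) (poch (alpha i + beta + (tot n)%:R + 1) (n i))^-1)
   * ((poch x (tot (fun i => nat_of_ord (l i))) / poch (x + beta + 2) (tot (fun i => nat_of_ord (l i))))
      * Kf beta n alpha (fun i => nat_of_ord (l i))))); last first.
  move=> l /forallP hl'.
  have [h1 h2 h3 h4] := hl l hl'.
  rewrite (Ccoef_Kf _ _ _ _ _ _ _ h4).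
  by apply: (cancel_help _ _ _ _ h2); ring.
rewrite -mulr_sumr.
rewrite [X in _ * X = _](_ : _ = Phi N.+1 (fun s => poch x s / poch (x + beta + 2) s) beta n alpha) //.
rewrite (Phi1 _ _ _ _ _ _ _ _ _ _ hB); last 3 first.
- by move=> i; rewrite ltnS.
- move=> l hl0 i.
  pose lf : {ffun 'I_p -> 'I_N.+1} := [ffun j => inord (l j)].
  have vl : (fun j => nat_of_ord (lf j)) = l.
    by apply: functional_extensionality => j; rewrite ffunE inordK // ltnS (leq_trans (hl0 j) (hnT j)).
  have hlf : forall j, (lf j <= n j)%N.
    by move=> j; rewrite ffunE inordK // ltnS (leq_trans (hl0 j) (hnT j)).
  have [_ _ h3 _] := hl lf hlf.
  by have := h3 i; rewrite vl.
- move=> L hL; move: hY0; rewrite -(subnKC hL) poch_add mulf_eq0 negb_or.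
  by case/andP.
rewrite prodfV invfM; ring.
Qed.
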